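(* Let $\Lambda=[\mu_1,L_1]\cup[\mu_2,L_2]$ with $0<\mu_1<L_1\le\mu_2<L_2$ and $L_1-\mu_1=L_2-\mu_2$, set $\rho=\frac{L_2+\mu_1}{L_2-\mu_1}$, $R=\frac{\mu_2-L_1}{L_2-\mu_1}$, $m=\left(\frac{\sqrt{\rho^2-R^2}-\sqrt{\rho^2-1}}{\sqrt{1-R^2}}\right)^2$, $h_0=\frac{1+m}{L_1}$, $h_1=\frac{1+m}{\mu_2}$, and $$\sigma_2^\Lambda(\lambda)=\frac{1}{2m}(1+m-\lambda h_0)(1+m-\lambda h_1)-1.$$ Then for every integer $n\ge1$, with $t=2n$, the polynomial $\lambda\mapsto \frac{T_n(\sigma_2^\Lambda(\lambda))}{T_n(\sigma_2^\Lambda(0))}$ is a minimizer of $\sup_{\lambda\in\Lambda}|P(\lambda)|$ over all real polynomials $P$ of degree at most $t$ with $P(0)=1$.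
   Context: $T_n$ denotes the Chebyshev polynomial of the first kind of degree $n$ ($T_0=1$, $T_1(x)=x$, $T_{n+1}=2xT_n-T_{n-1}$). *)

(* Defs.v *)
From HB Require Import structures.
From mathcomp Require Import all_boot all_order all_algebra.
From mathcomp Require Import all_classical all_reals.
Set Implicit Arguments. Unset Strict Implicit. Unset Printing Implicit Defensive.
Import Order.TTheory GRing.Theory Num.Theory.
Local Open Scope ring_scope.
Local Open Scope classical_set_scope.

Fixpoint cheb_pair (R : nzRingType) (n : nat) : {poly R} * {poly R} :=
  match n with
  | 0%N => (1, 'X)
  | k.+1 => let p := cheb_pair R k in (p.2, 2%:R *: 'X * p.2 - p.1)
  end.
Definition cheb (R : nzRingType) (n : nat) : {poly R} := (cheb_pair R n).1.

Definition Lam (R : realType) (mu1 L1 mu2 L2 : R) : set R :=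
  [set x | mu1 <= x <= L1] `|` [set x | mu2 <= x <= L2].

Definition supnorm_on (R : realType) (A : set R) (P : {poly R}) : R :=
  sup [set `|P.[x]| | x in A].

Definition rho_ (R : realType) (mu1 L2 : R) : R := (L2 + mu1) / (L2 - mu1).
Definition Rr_ (R : realType) (mu1 L1 mu2 L2 : R) : R := (mu2 - L1) / (L2 - mu1).
Definition m_ (R : realType) (mu1 L1 mu2 L2 : R) : R :=
  let rho := rho_ mu1 L2 in let r := Rr_ mu1 L1 mu2 L2 in
  ((Num.sqrt (rho ^+ 2 - r ^+ 2) - Num.sqrt (rho ^+ 2 - 1)) / Num.sqrt (1 - r ^+ 2)) ^+ 2.

Definition sigma2 (R : realType) (mu1 L1 mu2 L2 : R) : {poly R} :=
  let m := m_ mu1 L1 mu2 L2 in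
  let h0 := (1 + m) / L1 in let h1 := (1 + m) / mu2 in
  (2 * m)^-1 *: (((1 + m)%:P - h0 *: 'X) * ((1 + m)%:P - h1 *: 'X)) - 1.

Definition Qopt (R : realType) (mu1 L1 mu2 L2 : R) (n : nat) : {poly R} :=
  let s := sigma2 mu1 L1 mu2 L2 in
  ((cheb R n).[s.[0]])^-1 *: (cheb R n \Po s).

(* Main.v *)
Require Import Defs.
From HB Require Import structures.
From mathcomp Require Import all_boot all_order all_algebra.
From mathcomp Require Import all_classical all_reals.
From mathcomp Require Import topology normedtype derive trigo.
From mathcomp Require Import ring lra zify.
Import Order.TTheory GRing.Theory Num.Theory.
Import numFieldNormedType.Exports.
Local Open Scope ring_scope.
Local Open Scope classical_set_scope.
Section Cheb.
Variable R : realType.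

Lemma cheb0 : cheb R 0 = 1. Proof. by []. Qed.
Lemma cheb1 : cheb R 1 = 'X. Proof. by []. Qed.
Lemma chebSS n : cheb R n.+2 = 2%:R *: 'X * cheb R n.+1 - cheb R n.
Proof. by []. Qed.

Lemma cheb_hornerSS n x :
  (cheb R n.+2).[x] = 2 * x * (cheb R n.+1).[x] - (cheb R n).[x].
Proof. by rewrite chebSS hornerD hornerN hornerM hornerZ hornerX. Qed.

Lemma cheb_size n : (size (cheb R n) <= n.+1)%N.
Proof.
suff: (size (cheb R n) <= n.+1)%N /\ (size (cheb R n.+1) <= n.+2)%N by case.
elim: n => [|n [IH1 IH2]].
  by rewrite cheb0 cheb1 size_polyX size_polyC oner_neq0.
split => //; rewrite chebSS.
apply: (leq_trans (size_polyD _ _)); rewrite size_polyN geq_max.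
apply/andP; split; last by lia.
apply: (leq_trans (size_polyMleq _ _)).
have h1 : (size (2%:R *: ('X : {poly R})) <= 2)%N.
  by rewrite (leq_trans (size_scale_leq _ _)) // size_polyX.
move: h1 IH2; set a := size _; set b := size _; case: a => [|a]; case: b => [|b] /=; lia.
Qed.

Lemma cos_natpi k : cos (k%:R * pi) = (-1) ^+ k :> R.
Proof.
elim: k => [|k IH]; first by rewrite mul0r cos0 expr0.
by rewrite -addn1 natrD mulrDl mul1r cosDpi IH exprD expr1 mulrN1.
Qed.

Lemma sin_natpi k : sin (k%:R * pi) = 0 :> R.
Proof.
elim: k => [|k IH]; first by rewrite mul0r sin0.
by rewrite -addn1 natrD mulrDl mul1r sinDpi IH oppr0.
Qed.

Lemma cheb_cos n t : (cheb R n).[cos t] = cos (n%:R * t).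
Proof.
suff: (cheb R n).[cos t] = cos (n%:R * t) /\
      (cheb R n.+1).[cos t] = cos (n.+1%:R * t) by case.
elim: n => [|n [IH1 IH2]].
  by rewrite cheb0 cheb1 hornerC hornerX mul0r cos0 mul1r.
split => //; rewrite cheb_hornerSS IH1 IH2.
have e1 : n.+2%:R * t = n.+1%:R * t + t by rewrite -addn1 natrD mulrDl mul1r.
have e2 : n%:R * t = n.+1%:R * t - t by rewrite -addn1 natrD mulrDl mul1r addrK.
rewrite e1 e2 !cosD cosN sinN; ring.
Qed.

Lemma cheb_bound n x : -1 <= x <= 1 -> `|(cheb R n).[x]| <= 1.
Proof.
move=> hx; rewrite -(acosK (x:=x)); last by rewrite in_itv.
by rewrite cheb_cos cos_max.
Qed.

Lemma cheb_ge1 n x : 1 <= x -> 1 <= (cheb R n).[x].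
Proof.
move=> hx.
suff: 1 <= (cheb R n).[x] <= (cheb R n.+1).[x] by case/andP.
elim: n => [|n /andP[IH1 IH2]].
  by rewrite cheb0 cheb1 hornerC hornerX lexx hx.
rewrite cheb_hornerSS (le_trans IH1 IH2) /=; nra.
Qed.

End Cheb.
Section Roots.
Variable R : realType.

Lemma root_between (D : {poly R}) (a b : R) : a < b -> D.[a] * D.[b] < 0 ->
  exists2 r, a < r < b & root D r.
Proof.
move=> ab hab.
have hsign : forall u v : R, u * v < 0 -> (u < 0 /\ 0 < v) \/ (0 < u /\ v < 0).
  move=> u v huv; have [hu|hu] := ltP u 0; [left|right].
    split => //; nra.
  have hu' : 0 < u.
    by rewrite lt_neqAle hu andbT; apply/eqP => e; move: huv; rewrite -e mul0r ltxx.
  split => //; nra.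
have hiv : Num.min (horner D a) (horner D b) <= 0 <= Num.max (horner D a) (horner D b).
  case: (hsign _ _ hab) => [[ha hb]|[ha hb]].
  - by rewrite /= ge_min le_max (ltW ha) (ltW hb) orbT.
  - by rewrite /= ge_min le_max (ltW ha) (ltW hb) orbT.
have hc : {within `[a, b], continuous (horner D)}.
  by apply: continuous_subspaceT => y; exact: continuous_horner.
have [c cab Dc] := IVT (ltW ab) hc hiv.
move: cab; rewrite in_itv /= => /andP[ac cb].
exists c; last by apply/rootP.
have na : c != a by apply/eqP => e; move: hab; rewrite -e [D.[c]]Dc mul0r ltxx.
have nb : c != b by apply/eqP => e; move: hab; rewrite -e [D.[c]]Dc mulr0 ltxx.
by rewrite !lt_neqAle eq_sym na nb ac cb.
Qed.

Lemma chain_le (x : nat -> R) N :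
  (forall i, (i < N)%N -> x i < x i.+1) -> x 0%N <= x N.
Proof.
elim: N => // N IH h; apply: le_trans (ltW (h N (ltnSn _))).
by apply: IH => i iN; apply: h; lia.
Qed.

Lemma roots_alt (D : {poly R}) (x : nat -> R) N :
  (forall i, (i < N)%N -> x i < x i.+1) ->
  (forall i, (i < N)%N -> D.[x i] * D.[x i.+1] < 0) ->
  exists rs : seq R, [/\ size rs = N, uniq rs, all (root D) rs &
     all (fun r => x 0%N < r < x N) rs].
Proof.
elim: N => [|N IH] hinc halt; first by exists [::].
have hinc' : forall i, (i < N)%N -> x i < x i.+1 by move=> i iN; apply: hinc; lia.
have halt' : forall i, (i < N)%N -> D.[x i] * D.[x i.+1] < 0.
  by move=> i iN; apply: halt; lia.
have [rs [s u rt bd]] := IH hinc' halt'.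
have [r /andP[r1 r2] rr] := @root_between D _ _ (hinc N (ltnSn _)) (halt N (ltnSn _)).
have x0N : x 0%N <= x N := @chain_le x N hinc'.
exists (rcons rs r); split.
- by rewrite size_rcons s.
- rewrite rcons_uniq u andbT; apply/negP => rin.
  by move/allP: bd => /(_ r rin) /andP[_ ]; rewrite ltNge (ltW r1).
- by rewrite all_rcons rr.
- rewrite all_rcons (le_lt_trans x0N r1) r2 /=.
  apply/allP => y yin; move/allP: bd => /(_ y yin) /andP[-> h] /=.
  exact: lt_trans h (hinc N (ltnSn _)).
Qed.

Lemma poly_bounded (P : {poly R}) M : 0 <= M ->
  exists B, forall x, `|x| <= M -> `|P.[x]| <= B.
Proof.
move=> M0; elim/poly_ind: P => [|p c [B hB]].
  by exists 0 => x _; rewrite horner0 normr0.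
exists (B * M + `|c|) => x hx.
rewrite hornerMXaddC (le_trans (ler_normD _ _)) // lerD2r normrM.
have B0 : 0 <= B by apply: le_trans (hB 0 _); rewrite ?normr0.
by apply: ler_pM => //; apply: hB.
Qed.

End Roots.
Lemma m_facts (R : realType) (mu1 L1 mu2 L2 : R) :
  0 < mu1 -> mu1 < L1 -> L1 <= mu2 -> mu2 < L2 -> L1 - mu1 = L2 - mu2 ->
  let m := m_ mu1 L1 mu2 L2 in 0 < m /\
  (1 + m) ^+ 2 * ((L1 - mu1) * (mu2 - mu1)) = 4%:R * m * (L1 * mu2).
Proof.
move=> h1 h2 h3 h4 h5 m.
have hL2 : L2 = mu2 + L1 - mu1 by lra.
pose D := L2 - mu1.
have Dnz : D != 0 by apply/eqP => eq0; rewrite /D in eq0; lra.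
have e1 : rho_ mu1 L2 ^+ 2 - Rr_ mu1 L1 mu2 L2 ^+ 2 = 4%:R * (L1 * mu2) / D ^+ 2.
  rewrite /rho_ /Rr_ /D hL2; field; apply/eqP => eq0; lra.
have e2 : rho_ mu1 L2 ^+ 2 - 1 = 4%:R * (L2 * mu1) / D ^+ 2.
  rewrite /rho_ /D hL2; field; apply/eqP => eq0; lra.
have e3 : 1 - Rr_ mu1 L1 mu2 L2 ^+ 2 = 4%:R * ((L1 - mu1) * (mu2 - mu1)) / D ^+ 2.
  rewrite /Rr_ /D hL2; field; apply/eqP => eq0; lra.
have Dp : 0 < D ^+ 2 by rewrite exprn_even_gt0.
have p1 : 0 < 4%:R * (L1 * mu2) / D ^+ 2.
  by rewrite divr_gt0 // mulr_gt0 // mulr_gt0 //; lra.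
have p2 : 0 < 4%:R * (L2 * mu1) / D ^+ 2.
  by rewrite divr_gt0 // mulr_gt0 // mulr_gt0 //; lra.
have p3 : 0 < 4%:R * ((L1 - mu1) * (mu2 - mu1)) / D ^+ 2.
  by rewrite divr_gt0 // mulr_gt0 // mulr_gt0 //; lra.
have hm : m = ((Num.sqrt (4%:R * (L1 * mu2) / D ^+ 2) - Num.sqrt (4%:R * (L2 * mu1) / D ^+ 2))
     / Num.sqrt (4%:R * ((L1 - mu1) * (mu2 - mu1)) / D ^+ 2)) ^+ 2.
  by rewrite /m /m_ /= e1 e2 e3.
move: hm p1 p2 p3.
set A1 := 4%:R * (L1 * mu2) / D ^+ 2.
set A2 := 4%:R * (L2 * mu1) / D ^+ 2.
set A3 := 4%:R * ((L1 - mu1) * (mu2 - mu1)) / D ^+ 2.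
move=> hm p1 p2 p3.
have eA : A3 = A1 - A2.
  rewrite /A1 /A2 /A3 /D hL2; field; apply/eqP => eq0; lra.
set s1 := Num.sqrt A1 in hm; set s2 := Num.sqrt A2 in hm;
set s3 := Num.sqrt A3 in hm.
have hs1 : s1 ^+ 2 = A1 by rewrite sqr_sqrtr // ltW.
have hs2 : s2 ^+ 2 = A2 by rewrite sqr_sqrtr // ltW.
have hs3 : s3 ^+ 2 = A3 by rewrite sqr_sqrtr // ltW.
have s1p : 0 < s1 by rewrite sqrtr_gt0.
have s2p : 0 < s2 by rewrite sqrtr_gt0.
have s3p : 0 < s3 by rewrite sqrtr_gt0.
have s12 : s2 < s1 by rewrite ltr_sqrt //; lra.
have mp : 0 < m.
  rewrite hm exprn_even_gt0 //; apply/negP => /eqP/eqP.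
  by rewrite mulf_eq0 invr_eq0 subr_eq0 => /orP[/eqP|/eqP]; lra.
split => //.
have key : (1 + m) ^+ 2 * A3 = 4%:R * m * A1.
  rewrite hm expr_div_n hs3 eA -hs1 -hs2.
  have nz : s1 ^+ 2 - s2 ^+ 2 != 0 by apply/eqP; nra.
  by field.
move: key; rewrite /A1 /A3 => key.
have -> : (1 + m) ^+ 2 * ((L1 - mu1) * (mu2 - mu1)) =
  (1 + m) ^+ 2 * (4%:R * ((L1 - mu1) * (mu2 - mu1)) / D ^+ 2) * (D ^+ 2 / 4%:R).
  by field.
rewrite -mulrA mulrA key; field; exact: Dnz.
Qed.


Lemma sigma_size (R : realType) (mu1 L1 mu2 L2 : R) :
  (size (sigma2 mu1 L1 mu2 L2) <= 3)%N.
Proof.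
rewrite /sigma2 /=.
set m := m_ mu1 L1 mu2 L2.
have hA : forall c h : R, (size (c%:P - h *: 'X)%R <= 2)%N.
  move=> c h; apply: (leq_trans (size_polyD _ _)); rewrite size_polyN geq_max.
  rewrite (leq_trans (size_polyC_leq1 _)) //=.
  by rewrite (leq_trans (size_scale_leq _ _)) // size_polyX.
apply: (leq_trans (size_polyD _ _)); rewrite size_polyN size_poly1 geq_max andbT.
apply: (leq_trans (size_scale_leq _ _)).
apply: (leq_trans (size_polyMleq _ _)).
have := hA (1 + m) ((1 + m) / L1); have := hA (1 + m) ((1 + m) / mu2).
lia.
Qed.

Lemma alt_sign (R : realType) (E e a b : R) : e ^+ 2 = 1 ->
  `|a| < E -> `|b| < E -> (E * e - a) * (- (E * e) - b) < 0.
Proof.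
move=> /eqP; rewrite sqrf_eq1 => /orP[/eqP->|/eqP->] ha hb;
  move: ha hb; rewrite !ltr_norml => /andP[ha1 ha2] /andP[hb1 hb2]; nra.
Qed.

Lemma count_contra (n k : nat) : ((n + n).+1 < k)%N -> (k <= (2 * n).+1)%N -> False.
Proof. lia. Qed.

Theorem proposition3 (R : realType) (mu1 L1 mu2 L2 : R) (n : nat) :
  0 < mu1 -> mu1 < L1 -> L1 <= mu2 -> mu2 < L2 -> L1 - mu1 = L2 - mu2 ->
  (1 <= n)%N ->
  let t := (2 * n)%N in
  let Q := Qopt mu1 L1 mu2 L2 n in
  [/\ (size Q <= t.+1)%N, Q.[0] = 1 &
      forall P : {poly R}, (size P <= t.+1)%N -> P.[0] = 1 ->
        supnorm_on (Lam mu1 L1 mu2 L2) Q <= supnorm_on (Lam mu1 L1 mu2 L2) P].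
Proof.
move=> h1 h2 h3 h4 h5 hn t Q.
have [mp key] := @m_facts R mu1 L1 mu2 L2 h1 h2 h3 h4 h5.
set m := m_ mu1 L1 mu2 L2 in mp key.
set sig := sigma2 mu1 L1 mu2 L2.
pose kk := (1 + m) ^+ 2 / (2 * m * (L1 * mu2)).
have mn0 : m != 0 by rewrite gt_eqF.
have L1n0 : L1 != 0 by apply/eqP => e; lra.
have mu2n0 : mu2 != 0 by apply/eqP => e; lra.
have kkp : 0 < kk.
  rewrite /kk divr_gt0 //; first by rewrite exprn_even_gt0 //; apply/eqP => e; lra.
  by apply: mulr_gt0; [apply: mulr_gt0 | apply: mulr_gt0]; lra.
have sigE x : sig.[x] = kk * ((x - L1) * (x - mu2)) - 1.
  rewrite /sig /sigma2 /= -/m !(hornerD, hornerN, hornerZ, hornerM, hornerC, hornerX) /kk; field.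
  by rewrite mn0 L1n0 mu2n0.
have kp1 : kk * ((mu1 - L1) * (mu1 - mu2)) = 2.
  have -> : (mu1 - L1) * (mu1 - mu2) = (L1 - mu1) * (mu2 - mu1) by ring.
  rewrite /kk mulrAC key; field; by rewrite mn0 L1n0 mu2n0.
have s0 : 1 <= sig.[0].
  have -> : sig.[0] = 1 + (1 - m) ^+ 2 / (2 * m).
    by rewrite sigE /kk; field; rewrite mn0 L1n0 mu2n0.
  by rewrite lerDl divr_ge0 ?sqr_ge0 // mulr_ge0 // ltW.
pose c0 := (cheb R n).[sig.[0]].
have c0ge1 : 1 <= c0 by apply: cheb_ge1.
have c0p : 0 < c0 by apply: lt_le_trans c0ge1.
pose E := c0^-1.
have Ep : 0 < E by rewrite invr_gt0.
have QE x : Q.[x] = E * (cheb R n).[sig.[x]].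
  by rewrite /Q /Qopt -/sig hornerZ horner_comp.
have Lam_sig x : (Lam mu1 L1 mu2 L2) x -> 0 <= (x - L1) * (x - mu2) <= (mu1 - L1) * (mu1 - mu2).
  case=> /andP[xa xb]; apply/andP; split.
  - have u : x - L1 <= 0 by lra.
    have v : x - mu2 <= 0 by lra.
    by rewrite mulr_le0.
  - have w : 0 <= (x - mu1) * (L1 + mu2 - x - mu1) by rewrite mulr_ge0 //; lra.
    nra.
  - have u : 0 <= x - L1 by lra.
    have v : 0 <= x - mu2 by lra.
    by rewrite mulr_ge0.
  - have w : 0 <= (L2 - x) * (x + L2 - L1 - mu2) by rewrite mulr_ge0 //; lra.
    have e : L2 = mu2 + L1 - mu1 by lra.
    rewrite e in w; nra.

have Lam_sig1 x : (Lam mu1 L1 mu2 L2) x -> -1 <= sig.[x] <= 1.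
  move=> /Lam_sig /andP[p1 p2]; rewrite sigE; apply/andP; split; nra.
have Lam_abs x : (Lam mu1 L1 mu2 L2) x -> `|x| <= L2.
  by case=> /andP[xa xb]; rewrite ler_norml; apply/andP; split; lra.
have sQ : (size Q <= t.+1)%N.
  rewrite /Q /Qopt -/sig; apply: (leq_trans (size_scale_leq _ _)).
  apply: (leq_trans (size_comp_poly_leq _ _)).
  have := cheb_size R n; have := @sigma_size R mu1 L1 mu2 L2; rewrite -/sig /t.
  move: (size (cheb R n)) (size sig) => a b hb ha.
  rewrite ltnS [(2 * n)%N]mulnC; apply: leq_mul; [by case: (a) ha | by case: (b) hb].
split => //.
- by rewrite QE -/c0 /E mulVf // gt_eqF.
move=> P sP P0.
have ne : (Lam mu1 L1 mu2 L2) !=set0 by exists mu1; left => /=; rewrite lexx ltW.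
have supQ : supnorm_on (Lam mu1 L1 mu2 L2) Q <= E.
  apply: ge_sup; first by case: ne => x hx; exists `|Q.[x]|, x.
  move=> y [x hx <-]; rewrite QE normrM gtr0_norm //; apply: ler_piMr.
    exact: ltW.
  by apply: cheb_bound; apply: Lam_sig1.
apply: (le_trans supQ).
rewrite leNgt; apply/negP => hlt.
have L2p : 0 <= L2 by lra.
have [B hB] := @poly_bounded R P L2 L2p.
have hsup : has_sup [set `|P.[x]| | x in Lam mu1 L1 mu2 L2].
  split; first by case: ne => x hx; exists `|P.[x]|, x.
  by exists B => y [x hx <-]; apply/hB/Lam_abs.
have hP x : (Lam mu1 L1 mu2 L2) x -> `|P.[x]| < E.
  move=> hx; apply: le_lt_trans hlt.
  by apply: (sup_upper_bound hsup); exists x.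
pose g := (mu2 - L1) / 2.
pose cc := (L1 + mu2) / 2.
pose w (s : R) := (s + 1) / kk + g ^+ 2.
pose q (s : R) := Num.sqrt (w s).
have hg : 0 <= g by rewrite /g divr_ge0 // subr_ge0.
have hcc : (cc - mu1) ^+ 2 = 2 / kk + g ^+ 2.
  have -> : 2 / kk = (mu1 - L1) * (mu1 - mu2) by rewrite -kp1; field; rewrite gt_eqF.
  by rewrite /cc /g; field.
have w0 s : -1 <= s -> 0 <= w s.
  move=> hs; rewrite /w; apply: addr_ge0; last exact: sqr_ge0.
  by apply: divr_ge0; [lra | exact: ltW].
have hq s : -1 <= s -> q s ^+ 2 = w s by move=> hs; rewrite sqr_sqrtr // w0.
have q0 s : 0 <= q s by apply: sqrtr_ge0.
have qlo s : -1 <= s -> g <= q s.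
  move=> hs; have := hq s hs; have := q0 s; rewrite /w => qq0 e.
  have : 0 <= (s + 1) / kk by apply: divr_ge0; [lra | exact: ltW].
  nra.
have qhi s : s <= 1 -> -1 <= s -> q s <= cc - mu1.
  move=> hs1 hs; have := hq s hs; have := q0 s; rewrite /w => qq0 e.
  have : (s + 1) / kk <= 2 / kk by rewrite ler_pM2r ?invr_gt0 //; lra.
  have hc0 : 0 <= cc - mu1 by rewrite /cc; lra.
  nra.
have qmono s s' : -1 <= s -> s < s' -> q s < q s'.
  move=> hs ss'.
  have ws : w s < w s' by rewrite /w ltrD2r ltr_pM2r ?invr_gt0 //; lra.
  by rewrite /q ltr_sqrt //; apply: le_lt_trans (w0 s hs) ws.
pose aL s := cc - q s.
pose aR s := cc + q s.
have sigaL s : -1 <= s -> sig.[aL s] = s.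
  move=> hs; rewrite sigE.
  have -> : (aL s - L1) * (aL s - mu2) = q s ^+ 2 - g ^+ 2 by rewrite /aL /cc /g; field.
  by rewrite hq // /w addrK; field; rewrite gt_eqF.
have sigaR s : -1 <= s -> sig.[aR s] = s.
  move=> hs; rewrite sigE.
  have -> : (aR s - L1) * (aR s - mu2) = q s ^+ 2 - g ^+ 2 by rewrite /aR /cc /g; field.
  by rewrite hq // /w addrK; field; rewrite gt_eqF.
have aLin s : -1 <= s <= 1 -> mu1 <= aL s <= L1.
  case/andP=> hs1 hs2; have := qlo s hs1; have := qhi s hs2 hs1.
  rewrite /aL /cc /g => u v; apply/andP; split; lra.
have aRin s : -1 <= s <= 1 -> mu2 <= aR s <= L2.
  case/andP=> hs1 hs2; have := qlo s hs1; have := qhi s hs2 hs1.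
  rewrite /aR /cc /g => u v; apply/andP; split; lra.
have n0 : n%:R != 0 :> R by rewrite pnatr_eq0 -lt0n.
have npos : 0 < n%:R :> R by rewrite ltr0n.
pose th i := i%:R * pi / n%:R :> R.
pose cs i := cos (th i).
have csb i : -1 <= cs i <= 1 by rewrite cos_geN1 cos_le1.
have thin i : (i <= n)%N -> th i \in `[0, pi]%R.
  move=> iN; rewrite in_itv /=; apply/andP; split.
    by rewrite /th divr_ge0 // mulr_ge0 // ltW // pi_gt0.
  by rewrite /th ler_pdivrMr // [X in X <= _]mulrC ler_pM2l ?pi_gt0 // ler_nat.
have csdec i : (i < n)%N -> cs i.+1 < cs i.
  move=> iN; rewrite /cs ltr_cos ?thin // ?(ltnW iN) //.
  by rewrite /th ltr_pM2r ?invr_gt0 // ltr_pM2r ?pi_gt0 // ltr_nat.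
have Tcs i : (cheb R n).[cs i] = (-1) ^+ i.
  rewrite /cs cheb_cos.
  have -> : n%:R * th i = i%:R * pi by rewrite /th; field.
  exact: cos_natpi.
have Tcs' i : (cheb R n).[- cs i] = (-1) ^+ (n + i).
  have -> : - cs i = cos (pi - th i) by rewrite addrC cosDpi cosN.
  rewrite cheb_cos.
  have -> : n%:R * (pi - th i) = n%:R * pi + - (i%:R * pi) by rewrite /th; field.
  by rewrite cosD cosN sinN !cos_natpi !sin_natpi mul0r subr0 exprD.
pose x i := aL (cs i).
pose y i := aR (- cs i).
have csb' i : -1 <= - cs i <= 1.
  by have := csb i; case/andP => a b; apply/andP; split; lra.
have xL i : (Lam mu1 L1 mu2 L2) (x i) by left; apply: aLin.
have yL i : (Lam mu1 L1 mu2 L2) (y i) by right; apply: aRin.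
have Qx i : Q.[x i] = E * (-1) ^+ i.
  by rewrite QE sigaL ?Tcs //; case/andP: (csb i).
have Qy i : Q.[y i] = E * (-1) ^+ (n + i).
  by rewrite QE sigaR ?Tcs' //; case/andP: (csb' i).
pose D := Q - P.
have DE z : D.[z] = Q.[z] - P.[z] by rewrite /D hornerD hornerN.
have hx i : (i < n)%N -> x i < x i.+1.
  move=> iN; rewrite /x /aL ltrD2l ltrN2; apply: qmono (csdec i iN).
  by case/andP: (csb i.+1).
have hy i : (i < n)%N -> y i < y i.+1.
  move=> iN; rewrite /y /aR ltrD2l; apply: qmono; first by case/andP: (csb' i).
  by rewrite ltrN2; apply: csdec.
have ax i : (i < n)%N -> D.[x i] * D.[x i.+1] < 0.
  move=> _; rewrite !DE !Qx exprS mulN1r mulrN; apply: alt_sign.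
  - exact: sqrr_sign.
  - exact: hP.
  - exact: hP.
have ay i : (i < n)%N -> D.[y i] * D.[y i.+1] < 0.
  move=> _; rewrite !DE !Qy addnS exprS mulN1r mulrN; apply: alt_sign.
  - exact: sqrr_sign.
  - exact: hP.
  - exact: hP.
have [rs1 [s1 u1 r1 b1]] := @roots_alt R D x n hx ax.
have [rs2 [s2 u2 r2 b2]] := @roots_alt R D y n hy ay.
have x0 : mu1 <= x 0%N by case/andP: (aLin _ (csb 0%N)).
have xn : x n <= L1 by case/andP: (aLin _ (csb n)).
have y0 : mu2 <= y 0%N by case/andP: (aRin _ (csb' 0%N)).
have yn : y n <= L2 by case/andP: (aRin _ (csb' n)).
have in1 r : r \in rs1 -> mu1 < r < L1.
  move=> rin; move/allP: b1 => /(_ r rin) /andP[a b].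
  by rewrite (le_lt_trans x0 a) (lt_le_trans b xn).
have in2 r : r \in rs2 -> mu2 < r < L2.
  move=> rin; move/allP: b2 => /(_ r rin) /andP[a b].
  by rewrite (le_lt_trans y0 a) (lt_le_trans b yn).
pose rs := 0 :: rs1 ++ rs2.
have Q0 : Q.[0] = 1 by rewrite QE -/c0 /E mulVf // gt_eqF.
have rootrs : all (root D) rs.
  by rewrite /rs /= all_cat r1 r2 !andbT rootE DE Q0 P0 subrr.
have urs : uniq rs.
  rewrite /rs /= cat_uniq u1 u2 andbT mem_cat; apply/andP; split.
    apply/negP => /orP[/in1|/in2] /andP[a _]; lra.
  apply/hasP => -[r /in2 /andP[a _] /in1 /andP[_ b]]; lra.
have sD : (size D <= t.+1)%N.
  by apply: (leq_trans (size_polyD _ _)); rewrite size_polyN geq_max sQ sP.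
case: (eqVneq D 0) => [Dz|Dn0].
  have QP : Q = P by apply: subr0_eq.
  have := hP _ (xL 0%N); rewrite -QP Qx expr0 mulr1 gtr0_norm // ltxx //.
have := max_poly_roots Dn0 rootrs urs.
rewrite /rs /= size_cat s1 s2 => hh.
exact: (@count_contra n (size D)).
Qed.
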